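(* If $L$ is a finite dimensional representation of $Y^{[p]}$, then the subspace $L^0=\{v\in L : e^{(r)}.v=0 \text{ for all } r>0\}$ is non-zero.
   Context: Let $k$ be an algebraically closed field of characteristic $p>2$, parities $|1|=0$, $|2|=1$. $Y=Y_{1|1}$ is the superalgebra over $k$ with generators $t_{i,j}^{(r)}$ ($1\le i,j\le2$, $r>0$, parity $|i|+|j|$) and relations $[t_{i,j}^{(r)},t_{k,l}^{(s)}]=(-1)^{|i||j|+|i||k|+|j||k|}\sum_{t=0}^{\min(r,s)-1}(t_{k,j}^{(t)}t_{i,l}^{(r+s-1-t)}-t_{k,j}^{(r+s-1-t)}t_{i,l}^{(t)})$, $t_{i,j}^{(0)}=\delta_{ij}$; $t_{i,j}(u)=\sum_{r\ge0}t_{i,j}^{(r)}u^{-r}$. The elements $d_i^{(r)},e^{(r)},f^{(r)}$ are the coefficients of $d_i(u)$, $e(u)=\sum_{r>0}e^{(r)}u^{-r}$, $f(u)$ defined by $t_{1,1}=d_1$, $t_{1,2}=d_1e$, $t_{2,1}=fd_1$, $t_{2,2}=fd_1e+d_2$. Let $b_1(u)=d_1(u)d_1(u-1)\cdots d_1(u-p+1)$, $b_2(u)=d_2(u)^{-1}\cdots d_2(u-p+1)^{-1}$ with coefficients $b_i^{(r)}$; the $b_i^{(rp)}$ are central and $Y^{[p]}=Y/YZ_p(Y)_+$, where $Z_p(Y)_+$ is the ideal generated by the $b_i^{(rp)}$ ($i=1,2,r>0$) in the subalgebra they generate. Images in $Y^{[p]}$ keep the same names. *)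

(* Defs.v *)
From HB Require Import structures.
From mathcomp Require Import all_boot all_order all_algebra.
Set Implicit Arguments. Unset Strict Implicit. Unset Printing Implicit Defensive.
Import GRing.Theory.
Local Open Scope ring_scope.

(* Formal power series in u^{-1} with coefficients in a (non-commutative)
   ring R: a series s represents  sum_{r>=0} s r * u^{-r}. *)
Section Series.
Variable R : pzRingType.
Definition series := nat -> R.

Definition sone : series := fun n => (n == 0%N)%:R.
Definition sadd (a b : series) : series := fun n => a n + b n.
Definition ssub (a b : series) : series := fun n => a n - b n.
Definition smul (a b : series) : series :=
  fun n => \sum_(m < n.+1) a m * b (n - m)%N.
Definition spow (a : series) (m : nat) : series := iter m (smul a) sone.
(* inverse of a series with constant term 1: (1 - x)^{-1} = sum_m x^m,
   where x = 1 - a has zero constant term, so only m <= n contributes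
   to the coefficient of u^{-n}. *)
Definition sinv (a : series) : series :=
  fun n => \sum_(m < n.+1) spow (ssub sone a) m n.
(* substitution u |-> u - c :  (u-c)^{-r} = sum_m C(r+m-1,m) c^m u^{-r-m} *)
Definition sshift (c : nat) (a : series) : series :=
  fun n => \sum_(r < n.+1) a r *+ ('C(n.-1, n - r) * c ^ (n - r))%N.
End Series.

(* indices 1,2 are encoded as the ordinals 0,1 of 'I_2; the parity |i| of an
   index i is then its value (|1| = 0, |2| = 1). *)
Definition sgn (R : pzRingType) (m : nat) : R := (-1) ^+ m.

Section Yangian.
Variable R : pzRingType.
(* T i j r is the image of t_{i,j}^{(r)} (only r > 0 is used) *)
Variable T : 'I_2 -> 'I_2 -> nat -> R.

Definition tser (i j : 'I_2) : series R :=
  fun r => if r == 0%N then (i == j)%:R else T i j r.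

Definition Y_rel : Prop :=
  forall (i j k l : 'I_2) (r s : nat), (0 < r)%N -> (0 < s)%N ->
    T i j r * T k l s - sgn R ((i + j) * (k + l))%N * (T k l s * T i j r) =
    sgn R (i * j + i * k + j * k)%N *
      \sum_(t < minn r s)
        (tser k j t * tser i l (r + s - 1 - t)%N
         - tser k j (r + s - 1 - t)%N * tser i l t).

Definition i1 : 'I_2 := ord0.
Definition i2 : 'I_2 := ord_max.

(* Gauss decomposition: t11 = d1, t12 = d1 e, t21 = f d1, t22 = f d1 e + d2 *)
Definition dser1 : series R := tser i1 i1.
Definition eser : series R := smul (sinv dser1) (tser i1 i2).
Definition fser : series R := smul (tser i2 i1) (sinv dser1).
Definition dser2 : series R :=
  ssub (tser i2 i2) (smul (smul fser dser1) eser).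

Definition bser1 (p : nat) : series R :=
  foldr (fun c acc => smul (sshift c dser1) acc) (sone R) (iota 0 p).
Definition bser2 (p : nat) : series R :=
  foldr (fun c acc => smul (sinv (sshift c dser2)) acc) (sone R) (iota 0 p).

Definition restricted (p : nat) : Prop :=
  forall r, (0 < r)%N -> bser1 p (r * p)%N = 0 /\ bser2 p (r * p)%N = 0.
End Yangian.

(* A finite dimensional representation of Y^{[p]} on the super vector space
   L = k^n (column vectors), whose standard basis vector b has parity par b:
   T i j r is the matrix of t_{i,j}^{(r)}, homogeneous of parity |i|+|j|,
   the defining relations of Y hold, and the b_i^{(rp)} (r>0) act by 0. *)
Definition Yp_rep (k : fieldType) (p n : nat) (par : 'I_n -> bool)
    (T : 'I_2 -> 'I_2 -> nat -> 'M[k]_n) : Prop :=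
  [/\ forall i j r a b, (0 < r)%N -> T i j r a b != 0 ->
        par a (+) par b = odd (i + j),
      Y_rel T
    & restricted T p].

(* Main.v *)
Require Import Defs.
From HB Require Import structures.
From mathcomp Require Import all_boot all_order all_algebra.
From mathcomp Require Import zify.
From Stdlib Require Import Classical.
Import GRing.Theory.
Local Open Scope ring_scope.

Section SeriesLemmas.
Variable R : nzRingType.
Implicit Types a b c : series R.

Lemma smul_eq a a' b b' n : (forall i, (i <= n)%N -> a i = a' i) ->
  (forall i, (i <= n)%N -> b i = b' i) -> smul a b n = smul a' b' n.
Proof.
move=> ha hb; apply: eq_bigr => i _.
have hi : (i <= n)%N by rewrite -ltnS.
by rewrite ha // hb // leq_subr.
Qed.

Definition tp (N : nat) a : {poly R} := \poly_(i < N) a i.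

Lemma smulE N a b n : (n < N)%N -> smul a b n = (tp N a * tp N b)`_n.
Proof.
move=> hn; rewrite coefM; apply: eq_bigr => i _; rewrite !coef_poly.
have hi : (i < N)%N by apply: leq_ltn_trans hn; rewrite -ltnS.
have hi2 : (n - i < N)%N by apply: leq_ltn_trans hn; rewrite leq_subr.
by rewrite hi hi2.
Qed.

Lemma coefM_eq (p p' q q' : {poly R}) n :
  (forall i, (i <= n)%N -> p`_i = p'`_i) ->
  (forall i, (i <= n)%N -> q`_i = q'`_i) -> (p * q)`_n = (p' * q')`_n.
Proof.
move=> hp hq; rewrite !coefM; apply: eq_bigr => i _.
have hi : (i <= n)%N by rewrite -ltnS.
by rewrite hp // hq // leq_subr.
Qed.

Lemma smulA a b c n : smul a (smul b c) n = smul (smul a b) c n.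
Proof.
rewrite (@smulE n.+1) // (@coefM_eq _ (tp n.+1 a) _ (tp n.+1 b * tp n.+1 c)) //;
  last by move=> i hi; rewrite coef_poly ltnS hi; apply: smulE.
rewrite mulrA (@smulE n.+1) //; apply: coefM_eq => // i hi.
by rewrite [RHS]coef_poly ltnS hi -smulE.
Qed.

Lemma smul1s b n : smul (sone R) b n = b n.
Proof.
rewrite /smul big_ord_recl /= subn0 /sone eqxx mul1r big1 ?addr0 // => i _.
by rewrite mul0r.
Qed.

Lemma spow_low (y : series R) m j : y 0%N = 0 -> (j < m)%N -> spow y m j = 0.
Proof.
move=> y0; elim: m j => // m IH j hj /=.
rewrite /smul big1 // => i _.
case: (posnP i) => [-> | hi]; first by rewrite y0 mul0r.
rewrite IH ?mulr0 //; have := ltn_ord i; lia.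
Qed.

Lemma smul_sinv a n : a 0%N = 1 -> smul a (sinv a) n = sone R n.
Proof.
move=> a0; set y := ssub (sone R) a.
have y0 : y 0%N = 0 by rewrite /y /ssub /sone /= a0 subrr.
have -> : smul a (sinv a) n =
   \sum_(m < n.+1) \sum_(i < n.+1) a i * spow y m (n - i)%N.
  rewrite exchange_big /smul /sinv; apply: eq_bigr => i _; rewrite mulr_sumr.
  have hw : ((n - i).+1 <= n.+1)%N by rewrite ltnS leq_subr.
  rewrite (big_ord_widen _ (fun m => a i * spow y m (n - i)%N) hw).
  rewrite big_mkcond /=; apply: eq_bigr => m _.
  case: ifP => // hm; rewrite spow_low ?mulr0 //; lia.
have E : forall m, \sum_(i < n.+1) a i * spow y m (n - i)%N =
    spow y m n - spow y m.+1 n.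
  move=> m.
  rewrite -[spow y m n](smul1s _ n) [spow y m.+1 n]/= /smul -sumrB.
  apply: eq_bigr => i _; rewrite -mulrBl /y /ssub /=.
  by rewrite opprB addrC subrK.
under eq_bigr => m _ do rewrite E.
rewrite -(big_mkord xpredT (fun m => spow y m n - spow y m.+1 n)).
have -> : \sum_(0 <= m < n.+1) (spow y m n - spow y m.+1 n) =
   - \sum_(0 <= m < n.+1) (spow y m.+1 n - spow y m n).
  by rewrite -sumrN; apply: eq_bigr => m _; rewrite opprB.
by rewrite telescope_sumr // (@spow_low y n.+1 n) // opprB subr0.
Qed.
End SeriesLemmas.

Section Core.
Variable R : nzRingType.
Variables (D X e : nat -> R).
Hypothesis hD0 : D 0%N = 1.
Hypothesis hX0 : X 0%N = 0.
Hypothesis he0 : e 0%N = 0.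
Hypothesis hXe : forall s, X s = smul D e s.
Hypothesis hD1 : forall s, D 1%N * D s = D s * D 1%N.
Hypothesis hD2 : forall s, D 2%N * D s = D s * D 2%N.
Hypothesis hX1 : forall s, (0 < s)%N -> D 1%N * X s - X s * D 1%N = X s.
Hypothesis hX2 : forall s, (0 < s)%N ->
  D 2%N * X s - X s * D 2%N = X s.+1 + D 1%N * X s - D s * X 1%N.
Hypothesis hX3 : forall r, (0 < r)%N -> D r * X 1%N - X 1%N * D r = X r.
Hypothesis hXX : forall m, (0 < m)%N -> X 1%N * X m + X m * X 1%N = 0.
Hypothesis h2 : forall x : R, x *+ 2 = 0 -> x = 0.

Lemma cancelD (F : nat -> R) : (forall s, smul D F s = 0) -> forall s, F s = 0.
Proof.
move=> H s; elim/ltn_ind: s => s IH.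
have := H s; rewrite /smul big_ord_recl /= subn0 hD0 mul1r big1 ?addr0 //.
move=> i _; rewrite IH ?mulr0 //; have := ltn_ord i; rewrite /bump /=; lia.
Qed.

Lemma X1e : X 1%N = e 1%N.
Proof. by rewrite hXe /smul !big_ord_recl big_ord0 /= hD0 he0 mulr0 mul1r !addr0. Qed.

Lemma L1 s : D 1%N * e s - e s * D 1%N = e s.
Proof.
apply/eqP; rewrite -subr_eq0; apply/eqP; move: s.
apply: (@cancelD (fun s => D 1%N * e s - e s * D 1%N - e s)) => s.
have -> : smul D (fun s => D 1%N * e s - e s * D 1%N - e s) s =
    D 1%N * X s - X s * D 1%N - X s.
  rewrite hXe /smul mulr_sumr mulr_suml -!sumrB; apply: eq_bigr => i _.
  by rewrite !mulrBr !mulrA hD1.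
case: (posnP s) => [->|hs]; first by rewrite hX0 mulr0 mul0r !subr0.
by rewrite hX1 // subrr.
Qed.

Lemma e_D1 s : e s * D 1%N = D 1%N * e s - e s.
Proof. by rewrite -[X in _ = _ - X](L1 s) opprB addrC subrK. Qed.


Definition G2 m := D 2%N * e m - e m * D 2%N - e m.+1 - D 1%N * e m.

Lemma smul_shift t : smul D (fun m => e m.+1) t = X t.+1.
Proof.
rewrite hXe /smul [in RHS]big_ord_recr /= subnn he0 mulr0 addr0.
apply: eq_bigr => i _; congr (_ * e _); have := ltn_ord i; lia.
Qed.

Lemma smulG2 t : smul D G2 t =
   D 2%N * X t - X t * D 2%N - X t.+1 - D 1%N * X t.
Proof.
rewrite -smul_shift hXe /smul !mulr_sumr mulr_suml -!sumrB.
apply: eq_bigr => i _; rewrite /G2 !mulrBr !mulrA hD1 hD2 //.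
Qed.

Lemma L2 m : (0 < m)%N -> D 2%N * e m - e m * D 2%N = e m.+1 + D 1%N * e m.
Proof.
have H : forall s, smul D (fun m => G2 m.+1) s = 0.
  move=> s.
  have E : smul D G2 s.+1 = smul D (fun m => G2 m.+1) s + D s.+1 * G2 0%N.
    rewrite /smul big_ord_recr /= subnn; congr (_ + _).
    apply: eq_bigr => i _; congr (_ * G2 _); have := ltn_ord i; lia.
  have G20 : G2 0%N = - e 1%N.
    by rewrite /G2 he0 !mulr0 mul0r subrr sub0r subr0.
  move: E; rewrite smulG2 hX2 // G20 mulrN X1e.
  have -> : forall a b c : R, a + b - c - a - b = - c.
    by move=> a b c; rewrite (addrAC (a + b)) (addrAC a) subrr add0r addrAC subrr add0r.
  by move=> E; apply: (addIr (- (D s.+1 * e 1%N))); rewrite add0r -E.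
case: m => // m _.
have := @cancelD _ H m; rewrite /G2 => /eqP; rewrite subr_eq add0r subr_eq => /eqP ->.
exact: addrC.
Qed.


Lemma L3 r : D r * e 1%N - e 1%N * D r = X r.
Proof.
case: (posnP r) => [->|hr]; first by rewrite hD0 mul1r mulr1 subrr hX0.
by rewrite -X1e hX3.
Qed.

Lemma e1_D r : e 1%N * D r = D r * e 1%N - X r.
Proof. by rewrite -(L3 r) opprB addrC subrK. Qed.

Definition br (A x : R) := A * x - x * A.

Lemma br_mul A x y : br A (x * y) = br A x * y + x * br A y.
Proof. by rewrite /br mulrBl mulrBr !mulrA addrA subrK. Qed.

Lemma br_add A x y : br A (x + y) = br A x + br A y.
Proof. by rewrite /br mulrDr mulrDl opprD addrACA. Qed.

Definition c r s := e r * e s + e s * e r.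

Lemma Lrs r s : (0 < r)%N -> (0 < s)%N ->
  br (D 2%N) (e r * e s) =
  e r.+1 * e s + e r * e s.+1 + (D 1%N * (e r * e s)) *+ 2 - e r * e s.
Proof.
move=> hr hs; rewrite br_mul /br !L2 // mulrDl mulrDr !mulrA e_D1 mulrBl -!mulrA.
have gen : forall a b d f : R, a + d + (b + (d - f)) = a + b + d *+ 2 - f.
  by move=> a b d f; rewrite mulr2n !addrA (addrAC a d b).
exact: gen.
Qed.

Lemma K1 r s : (0 < r)%N -> (0 < s)%N -> c r s = 0 -> c r.+1 s = - c r s.+1.
Proof.
move=> hr hs h0.
have E : br (D 2%N) (c r s) =
   c r.+1 s + c r s.+1 + (D 1%N * c r s) *+ 2 - c r s.
  rewrite /c br_add !Lrs //.
  have gen : forall a b f a' b' f' : R,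
    (a + b + (D 1%N * f) *+ 2 - f) + (b' + a' + (D 1%N * f') *+ 2 - f') =
    (a + a') + (b + b') + (D 1%N * (f + f')) *+ 2 - (f + f').
    move=> a b f a' b' f'; rewrite mulrDr mulrnDl opprD (addrC b' a').
    by rewrite (addrACA (a + b + _)) (addrACA (a + b)) (addrACA a).
  exact: gen.
move: E; rewrite h0 /br !mulr0 mul0r subr0 mul0rn addr0 subr0 => /eqP.
by rewrite eq_sym addr_eq0 => /eqP.
Qed.


Lemma K2 m : (0 < m)%N -> smul D (fun j => c 1%N j) m = smul X e m.
Proof.
move=> hm; apply/eqP; rewrite -subr_eq0; apply/eqP.
rewrite -(hXX m hm) X1e hXe /smul -sumrB mulr_sumr mulr_suml -big_split /=.
apply: eq_bigr => j _; rewrite /c mulrA e1_D mulrBl mulrDr !mulrA.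
by rewrite addrAC.
Qed.

Lemma Q0 N : (forall a, (a <= N)%N -> c a (N - a) = 0) -> smul e e N = 0.
Proof.
move=> H.
have E : smul e e N = \sum_(i < N.+1) e (N - i)%N * e i.
  rewrite /smul (reindex_inj rev_ord_inj) /=; apply: eq_bigr => i _.
  by rewrite subSS subKn // -ltnS.
apply: h2; rewrite mulr2n {2}E /smul -big_split /=.
apply: big1 => i _; apply: H; rewrite -ltnS; exact: ltn_ord.
Qed.

Theorem anticomm r s : c r s = 0.
Proof.
suff: forall L r s, (r + s)%N = L -> c r s = 0 by move=> H; exact: (H _ r s erefl).
move=> L; elim/ltn_ind: L => L IH {}r {}s hrs.
have Qz : forall N, (N < L)%N -> smul e e N = 0.
  move=> N hN; apply: Q0 => a ha; apply: (IH N hN); exact: subnKC.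
have base : forall m, m.+1 = L -> c 1%N m = 0.
  case=> [|m] hm; first by rewrite /c he0 mulr0 mul0r addr0.
  have := @K2 m.+1 (ltn0Sn m).
  have hXs : smul X e m.+1 = smul D (smul e e) m.+1.
    by rewrite smulA; apply: smul_eq => // i _; rewrite hXe.
  have R0 : smul D (smul e e) m.+1 = 0.
    by apply: big1 => i _; rewrite Qz ?mulr0 //; have := ltn_ord i; lia.
  rewrite hXs R0 /smul.
  rewrite big_ord_recl /= hD0 mul1r subn0 big1 ?addr0 //.
  move=> i _; rewrite (IH (1 + (m.+1 - bump 0 i))%N) ?mulr0 //.
  have := ltn_ord i; rewrite /bump /=; lia.
have step : forall r, (0 < r)%N -> (r < L)%N -> c r (L - r) = 0.
  elim=> // r' IHr _ hr'.
  case: (posnP r') => [-> | hr]; first by apply: base; lia.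
  rewrite K1 //; last by apply: (IH (r' + (L - r'.+1))%N) => //; lia.
  - have -> : (L - r'.+1).+1 = (L - r')%N by lia.
    by rewrite IHr ?oppr0 //; lia.
  - lia.
case: (posnP r) => [-> | hr]; first by rewrite /c he0 mulr0 mul0r addr0.
case: (posnP s) => [-> | hs]; first by rewrite /c he0 mulr0 mul0r addr0.
have -> : s = (L - r)%N by lia.
apply: step => //; lia.
Qed.


Lemma anti r s : e r * e s = - (e s * e r).
Proof. by apply/eqP; rewrite -addr_eq0; apply/eqP; exact: anticomm. Qed.

Lemma sq0 r : e r * e r = 0.
Proof. by apply: h2; rewrite mulr2n; exact: anticomm. Qed.

End Core.

Section Inst.
Variable R : pzRingType.
Variable T : 'I_2 -> 'I_2 -> nat -> R.
Hypothesis HY : Y_rel T.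

Lemma tserE i j r : (0 < r)%N -> tser T i j r = T i j r.
Proof. by case: r. Qed.

Lemma Yrel' (i j k l : 'I_2) (r s : nat) : (0 < r)%N -> (0 < s)%N ->
    tser T i j r * tser T k l s - sgn R ((i + j) * (k + l))%N * (tser T k l s * tser T i j r) =
    sgn R (i * j + i * k + j * k)%N *
      \sum_(t < minn r s)
        (tser T k j t * tser T i l (r + s - 1 - t)%N
         - tser T k j (r + s - 1 - t)%N * tser T i l t).
Proof. by move=> hr hs; rewrite !tserE //; apply: HY. Qed.

Let D := tser T i1 i1.
Let X := tser T i1 i2.

Lemma D0 : D 0%N = 1. Proof. by rewrite /D /tser eqxx. Qed.
Lemma X0 : X 0%N = 0. Proof. by rewrite /X /tser. Qed.

Lemma T110 : tser T i1 i1 0%N = 1. Proof. by rewrite /tser eqxx. Qed.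
Lemma T120 : tser T i1 i2 0%N = 0. Proof. by rewrite /tser. Qed.

Lemma hD1 s : D 1%N * D s = D s * D 1%N.
Proof.
case: (posnP s) => [->|hs]; first by rewrite D0 mul1r mulr1.
have := Yrel' i1 i1 i1 i1 1 s (ltn0Sn 0) hs.
rewrite (minn_idPl hs) big_ord1 /= /sgn /=.
rewrite ?(add0n, addn0, mul0n, muln0, mul1n, muln1, subn0, add1n, subSS) expr0 !mul1r.
by rewrite T110 mulr1 subrr => /eqP; rewrite subr_eq0 => /eqP.
Qed.


Lemma hD2 s : D 2%N * D s = D s * D 2%N.
Proof.
case: (posnP s) => [->|hs]; first by rewrite D0 mul1r mulr1.
have := Yrel' i1 i1 i1 i1 2 s (ltn0Sn 1) hs.
case: (ltnP s 2) => hs2.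
  have -> : s = 1%N by lia.
  rewrite big_ord1 /= /sgn /= ?(add0n, addn0, mul0n, muln0, subn0) expr0 !mul1r mulr1 subrr.
  by move=> /eqP; rewrite subr_eq0 => /eqP.
rewrite big_ord_recr big_ord1 /= /sgn /=.
rewrite ?(add0n, addn0, mul0n, muln0, mul1n, muln1, subn0) expr0.
rewrite !mul1r T110 mulr1 subrr add0r.
have -> : (2 + s - 1 - 1 = s)%N by lia.
by rewrite hD1 subrr => /eqP; rewrite subr_eq0 => /eqP.
Qed.


Lemma hX1 s : (0 < s)%N -> D 1%N * X s - X s * D 1%N = X s.
Proof.
move=> hs; have := Yrel' i1 i1 i1 i2 1 s (ltn0Sn 0) hs.
rewrite (minn_idPl hs) big_ord1 /= /sgn /=.
rewrite ?(add0n, addn0, mul0n, muln0, mul1n, muln1, subn0, add1n, subSS) expr0 !mul1r.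
by rewrite T120 mulr0 subr0.
Qed.

Lemma hX2 s : (0 < s)%N ->
  D 2%N * X s - X s * D 2%N = X s.+1 + D 1%N * X s - D s * X 1%N.
Proof.
move=> hs; have := Yrel' i1 i1 i1 i2 2 s (ltn0Sn 1) hs.
case: (ltnP s 2) => hs2.
  have -> : s = 1%N by lia.
  rewrite big_ord1 /= /sgn /= ?(add0n, addn0, mul0n, muln0, subn0) expr0 !mul1r T120 mulr0 subr0.
  by rewrite addrK.
rewrite big_ord_recr big_ord1 /= /sgn /=.
rewrite ?(add0n, addn0, mul0n, muln0, mul1n, muln1, subn0) expr0.
rewrite !mul1r T120 mulr0 subr0.
have -> : (2 + s - 1 - 1 = s)%N by lia.
have -> : (2 + s - 1 = s.+1)%N by lia.
by rewrite addrA.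
Qed.

Lemma hX3 r : (0 < r)%N -> D r * X 1%N - X 1%N * D r = X r.
Proof.
move=> hr; have := Yrel' i1 i1 i1 i2 r 1 hr (ltn0Sn 0).
rewrite (minn_idPr hr) big_ord1 /= /sgn /=.
rewrite ?(add0n, addn0, mul0n, muln0, mul1n, muln1, subn0, addnK) expr0 !mul1r.
by rewrite T120 mulr0 subr0.
Qed.

Lemma hXX m : (0 < m)%N -> X 1%N * X m + X m * X 1%N = 0.
Proof.
move=> hm; have := Yrel' i1 i2 i1 i2 1 m (ltn0Sn 0) hm.
rewrite (minn_idPl hm) big_ord1 /= /sgn /=.
rewrite ?(add0n, addn0, mul0n, muln0, mul1n, muln1, subn0) expr0 expr1 mul1r mulN1r opprK.
by rewrite T120 mulr0 mul0r subrr.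
Qed.

End Inst.

Theorem lemma3p4 (k : closedFieldType) (p : nat) (hp : prime p)
    (hchar : p \in [pchar k]) (hp2 : (2 < p)%N)
    (n : nat) (hn : (0 < n)%N) (par : 'I_n -> bool)
    (T : 'I_2 -> 'I_2 -> nat -> 'M[k]_n) :
  Yp_rep p par T ->
  exists v : 'cV[k]_n, v != 0 /\
    forall r : nat, (0 < r)%N -> eser T r *m v = 0.
Proof.
case=> _ HY _.
case: n hn par T HY => [//|n'] _ par T HY.
pose D := tser T i1 i1; pose X := tser T i1 i2; pose e := eser T.
have hD0 : D 0%N = 1 := T110 _ T.
have hX0 : X 0%N = 0 := T120 _ T.
have he0 : e 0%N = 0.
  by rewrite /e /eser /smul big_ord1 /= T120 mulr0.
have hXe : forall s, X s = smul D e s.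
  move=> s; rewrite /e /eser smulA -[LHS](@smul1s _ X s).
  by apply: smul_eq => // i _; rewrite smul_sinv.
have two : (2%:R : k) != 0.
  rewrite -(dvdn_pcharf hchar); apply/negP => /(dvdn_leq (ltn0Sn 1)); lia.
have h2 : forall x : 'M[k]_n'.+1, x *+ 2 = 0 -> x = 0.
  move=> x hx; have /eqP : (2%:R : k) *: x = 0 by rewrite scaler_nat.
  by rewrite scaler_eq0 (negbTE two) /= => /eqP.
have ac := @anti _ D X e hD0 hX0 he0 hXe (hD1 _ _ HY) (hD2 _ _ HY) (hX1 _ _ HY) (hX2 _ _ HY) (hX3 _ _ HY)
  (hXX _ _ HY) h2.
have sq := @sq0 _ D X e hD0 hX0 he0 hXe (hD1 _ _ HY) (hD2 _ _ HY) (hX1 _ _ HY) (hX2 _ _ HY) (hX3 _ _ HY)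
  (hXX _ _ HY) h2.
have ac' : forall r s, e r *m e s = - (e s *m e r) := ac.
have sq' : forall r, e r *m e r = 0 := sq.
have stepA : forall N, exists v : 'cV[k]_n'.+1,
    v != 0 /\ forall j, (j < N)%N -> e j *m v = 0.
  elim=> [|N [v [vn0 hv]]].
    exists (const_mx 1); split => //.
    apply/eqP => /matrixP /(_ ord0 ord0); rewrite !mxE => /eqP; rewrite oner_eq0.
    by [].
  case: (eqVneq (e N *m v) 0) => hN.
    exists v; split => // j; rewrite ltnS leq_eqVlt => /orP [/eqP -> //| hj].
    exact: hv.
  exists (e N *m v); split => // j; rewrite ltnS leq_eqVlt => /orP [/eqP -> | hj].
    by rewrite mulmxA sq' mul0mx.
  by rewrite mulmxA ac' mulNmx -mulmxA hv // mulmx0 oppr0.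
pose K N := (\bigcap_(j < N) kermx (e j)^T)%MS.
have inK : forall (w : 'rV_n'.+1) N, (w <= K N)%MS ->
    forall j, (j < N)%N -> w *m (e j)^T = 0.
  move=> w N /sub_bigcapmxP H j hj; apply/sub_kermxP; exact: (H (Ordinal hj)).
have Kin : forall m (w : 'M_(m, n'.+1)) N,
    (forall j, (j < N)%N -> w *m (e j)^T = 0) -> (w <= K N)%MS.
  move=> m w N H; apply/sub_bigcapmxP => j _; apply/sub_kermxP; exact: H.
have Kmono : forall N M, (N <= M)%N -> (K M <= K N)%MS.
  move=> N M hNM; apply: Kin => j hj; apply/sub_kermxP.
  by apply: (bigcapmx_inf (Ordinal (leq_trans hj hNM))).
have Kpos : forall N, (0 < \rank (K N))%N.
  move=> N; have [v [vn0 hv]] := stepA N.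
  have : (v^T <= K N)%MS by apply: Kin => j hj; rewrite -trmx_mul hv // trmx0.
  move/mxrankS; apply: leq_trans; rewrite lt0n mxrank_eq0.
  by apply: contra vn0 => /eqP h; rewrite -[v]trmxK h trmx0.
have stab : exists N, forall M, (N <= M)%N -> (K N <= K M)%MS.
  suff H : forall d N, (\rank (K N) < d)%N ->
      exists N', forall M, (N' <= M)%N -> (K N' <= K M)%MS.
    exact: (H _ 0%N (ltnSn _)).
  elim=> [//|d IH] N hd.
  case: (classic (exists M, (N <= M)%N /\ ~~ (K N <= K M)%MS)) => [[M [hNM hn]]|hno].
    apply: (IH M).
    have hlt : (\rank (K M) < \rank (K N))%N.
      by rewrite (ltn_leqif (mxrank_leqif_sup (Kmono _ _ hNM))).
    lia.
  exists N => M hNM; apply/negPn/negP => hn; apply: hno; exists M; split => //.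
have [N hN] := stab.
pose w := nz_row (K N).
have wn0 : w != 0 by rewrite nz_row_eq0 -mxrank_eq0 -lt0n Kpos.
exists w^T; split.
  apply/eqP => h; move/eqP: wn0; apply; by rewrite -[w]trmxK h trmx0.
move=> r hr.
have hw : (w <= K (maxn N r.+1))%MS.
  exact: submx_trans (nz_row_sub _) (hN _ (leq_maxl _ _)).
have h := inK w _ hw r (leq_trans (ltnSn r) (leq_maxr _ _)).
by rewrite -[eser T r]trmxK -trmx_mul h trmx0.
Qed.
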